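(* Let $0<e<\Lambda$, $\phi_h>0$, $f:[0,\phi_h]\to(0,1]$ strictly concave, strictly decreasing, differentiable with $f(0)=1$. Consider the two-player game with action sets $[0,\phi_h]$ and payoffs $\tilde{\mathcal M}_i(\phi_i,\phi_{-i})$ given by: - if $\phi_i=\phi_{-i}$: $e\phi_i$ if $\phi_i<\underline\phi$, and $\frac{\Lambda}{2}f(\phi_i)\phi_i$ if $\phi_i\ge\underline\phi$; - if $\phi_i<\phi_{-i}$: $e\phi_i$ if $\phi_{-i}<\bar\phi$, and $\min\{\Lambda f(\phi_i),e\}\phi_i$ if $\phi_{-i}\ge\bar\phi$; - if $\phi_i>\phi_{-i}$: $e\phi_i$ if $\phi_i<\underline\phi$, $m(\phi_i)$ if $\phi_i\in[\underline\phi,\bar\phi)$, and $0$ if $\phi_i\ge\bar\phi$. Let $\phi^*_m$ be the unique maximizer of $m(\phi)=(\Lambda f(\phi)-e)\phi$ over $[0,\phi_h]$. If $\phi^*_m\le\underline\phi\le\phi_h$, then $(\underline\phi,\underline\phi)$ is a Nash equilibrium.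
   Context: These payoffs are the limiting (driver abandonment rate $\beta\to0$) long-run revenue rates of two symmetric ride-hailing platforms using static prices, when passengers (total Poisson rate $\Lambda$) split across platforms by a Wardrop equilibrium equalizing the probability of not obtaining a ride (either no available driver or rejection of the quoted price); $e$ is the effective driver arrival rate per platform and $f(\phi)$ the probability a passenger accepts price $\phi$. Thresholds: $\underline{\phi}:=\inf\{\phi\in[0,\phi_h]: f(\phi)\le 2e/\Lambda\}$, $\bar\phi:=\inf\{\phi\in[0,\phi_h]: f(\phi)\le e/\Lambda\}$, with $\inf\emptyset=+\infty$ (so $\underline\phi=f^{-1}(2e/\Lambda)$, $\bar\phi=f^{-1}(e/\Lambda)$ when in range, and $0$ when $2e/\Lambda>1$, resp. $e/\Lambda>1$). A Nash equilibrium is a profile from which no player can strictly increase its payoff by unilateral deviation. *)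

(* Defs.v *)
From Stdlib Require Import Reals.
From Coquelicot Require Import Coquelicot.
Open Scope R_scope.

Definition in_act (phi_h x : R) : Prop := 0 <= x <= phi_h.

Definition differentiable_on_interval (f : R -> R) (a b : R) : Prop :=
  forall x, a <= x <= b -> exists l : R, forall eps : R, 0 < eps ->
    exists delta : R, 0 < delta /\
      forall y, a <= y <= b -> y <> x -> Rabs (y - x) < delta ->
        Rabs ((f y - f x) / (y - x) - l) < eps.

Definition strictly_concave_on (f : R -> R) (a b : R) : Prop :=
  forall x y t, a <= x <= b -> a <= y <= b -> x <> y -> 0 < t < 1 ->
    t * f x + (1 - t) * f y < f (t * x + (1 - t) * y).

Definition strictly_decreasing_on (f : R -> R) (a b : R) : Prop :=
  forall x y, a <= x <= b -> a <= y <= b -> x < y -> f y < f x.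

(* inf { phi in [0, phi_h] : f phi <= c }, with inf of empty = +oo *)
Definition threshold (f : R -> R) (phi_h c : R) : Rbar :=
  Glb_Rbar (fun phi => 0 <= phi <= phi_h /\ f phi <= c).

Definition phi_lo (f : R -> R) (Lambda e phi_h : R) : Rbar :=
  threshold f phi_h (2 * e / Lambda).
Definition phi_bar (f : R -> R) (Lambda e phi_h : R) : Rbar :=
  threshold f phi_h (e / Lambda).

Definition mfun (f : R -> R) (Lambda e phi : R) : R := (Lambda * f phi - e) * phi.

Definition payoff (f : R -> R) (Lambda e phi_h phi_i phi_o : R) : R :=
  let plo := phi_lo f Lambda e phi_h in
  let pbar := phi_bar f Lambda e phi_h in
  match total_order_T phi_i phi_o with
  | inleft (right _) (* phi_i = phi_o *) =>
      if Rbar_lt_dec (Finite phi_i) plo then e * phi_i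
      else Lambda / 2 * f phi_i * phi_i
  | inleft (left _) (* phi_i < phi_o *) =>
      if Rbar_lt_dec (Finite phi_o) pbar then e * phi_i
      else Rmin (Lambda * f phi_i) e * phi_i
  | inright _ (* phi_i > phi_o *) =>
      if Rbar_lt_dec (Finite phi_i) plo then e * phi_i
      else if Rbar_lt_dec (Finite phi_i) pbar then mfun f Lambda e phi_i
      else 0
  end.

Definition is_nash (M : R -> R -> R) (phi_h a b : R) : Prop :=
  in_act phi_h a /\ in_act phi_h b /\
  (forall a', in_act phi_h a' -> M a' b <= M a b) /\
  (forall b', in_act phi_h b' -> M b' a <= M b a).

(* Main.v *)
Require Import Defs.
From Stdlib Require Import Reals.
From Coquelicot Require Import Coquelicot.
From Stdlib Require Import Lra Psatz.
Open Scope R_scope.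

Lemma cont_of_diff (f : R -> R) a b (Hd : differentiable_on_interval f a b)
  x (Hx : a <= x <= b) eps (He : 0 < eps) :
  exists d, 0 < d /\ forall y, a <= y <= b -> Rabs (y - x) < d -> Rabs (f y - f x) < eps.
Proof.
  destruct (Hd x Hx) as [l Hl].
  destruct (Hl 1 Rlt_0_1) as [d [Hd0 Hdd]].
  assert (Hla : 0 <= Rabs l) by apply Rabs_pos.
  exists (Rmin d (eps / (Rabs l + 1))). split.
  { apply Rmin_pos; [lra|]. apply Rdiv_lt_0_compat; lra. }
  intros y Hy Hyx.
  destruct (Req_dec y x) as [E|E].
  { subst. replace (f x - f x) with 0 by ring. rewrite Rabs_R0; lra. }
  assert (Hyx1 : Rabs (y - x) < d) by (eapply Rlt_le_trans; [exact Hyx| apply Rmin_l]).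
  assert (Hyx2 : Rabs (y - x) < eps / (Rabs l + 1)) by (eapply Rlt_le_trans; [exact Hyx| apply Rmin_r]).
  specialize (Hdd y Hy E Hyx1).
  set (q := (f y - f x) / (y - x)) in *.
  assert (Hq : f y - f x = q * (y - x)) by (unfold q; field; lra).
  rewrite Hq, Rabs_mult.
  assert (Hq2 : Rabs q < Rabs l + 1).
  { pose proof (Rabs_triang (q - l) l). replace (q - l + l) with q in H by ring. lra. }
  assert (Hp : 0 <= Rabs (y - x)) by apply Rabs_pos.
  assert (eps / (Rabs l + 1) * (Rabs l + 1) = eps) by (field; lra).
  assert (0 <= Rabs q) by apply Rabs_pos.
  nra.
Qed.

Theorem theorem4 (Lambda e phi_h : R) (f : R -> R)
  (He : 0 < e) (HeL : e < Lambda) (Hph : 0 < phi_h)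
  (Hrange : forall x, 0 <= x <= phi_h -> 0 < f x <= 1)
  (Hconc : strictly_concave_on f 0 phi_h)
  (Hdec : strictly_decreasing_on f 0 phi_h)
  (Hdiff : differentiable_on_interval f 0 phi_h)
  (Hf0 : f 0 = 1)
  (phi_m : R)
  (Hmax : 0 <= phi_m <= phi_h /\
          forall x, 0 <= x <= phi_h -> mfun f Lambda e x <= mfun f Lambda e phi_m)
  (Huniq : forall y, 0 <= y <= phi_h ->
          (forall x, 0 <= x <= phi_h -> mfun f Lambda e x <= mfun f Lambda e y) ->
          y = phi_m)
  (plo : R) (Hplo : phi_lo f Lambda e phi_h = Finite plo)
  (Hcond : phi_m <= plo <= phi_h) :
  is_nash (payoff f Lambda e phi_h) phi_h plo plo.
Proof.
  destruct Hmax as [Hm0 Hmax].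
  assert (Hplo0 := Hplo).
  set (c := 2 * e / Lambda).
  assert (Hglb := Glb_Rbar_correct (fun phi => 0 <= phi <= phi_h /\ f phi <= c)).
  unfold phi_lo, threshold in Hplo. fold c in Hplo. rewrite Hplo in Hglb.
  destruct Hglb as [Hlb Hgr].
  assert (Hpr : 0 <= plo <= phi_h) by lra.
  assert (Hle : f plo <= c).
  { destruct (Rle_dec (f plo) c) as [?|Hn]; [assumption|]. exfalso.
    destruct (cont_of_diff f 0 phi_h Hdiff plo Hpr (f plo - c)) as [d [Hd0 Hd]]; [lra|].
    assert (Hb : Rbar_le (plo + d/2) plo).
    { apply Hgr. intros x [Hx1 Hx2]. simpl.
      destruct (Rle_dec (plo + d/2) x) as [?|Hn2]; [assumption|]. exfalso.
      specialize (Hlb x (conj Hx1 Hx2)). simpl in Hlb.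
      assert (Rabs (x - plo) < d) by (rewrite Rabs_right; lra).
      specialize (Hd x Hx1 H). apply Rabs_lt_between in Hd. lra. }
    simpl in Hb. lra. }
  assert (Hge : 0 < plo -> c <= f plo).
  { intros Hp. destruct (Rle_dec c (f plo)) as [?|Hn]; [assumption|]. exfalso.
    destruct (cont_of_diff f 0 phi_h Hdiff plo Hpr (c - f plo)) as [d [Hd0 Hd]]; [lra|].
    set (y := plo - Rmin (d/2) plo).
    assert (Hm1 := Rmin_l (d/2) plo). assert (Hm2 := Rmin_r (d/2) plo).
    assert (Hm3 : 0 < Rmin (d/2) plo) by (apply Rmin_pos; lra).
    assert (Hy : 0 <= y <= phi_h) by (unfold y; lra).
    assert (Rabs (y - plo) < d) by (rewrite Rabs_left; unfold y; lra).
    specialize (Hd y Hy H). apply Rabs_lt_between in Hd.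
    assert (Hfy : f y <= c) by lra. specialize (Hlb y (conj Hy Hfy)). simpl in Hlb. unfold y in Hlb. lra. }
  set (V := Lambda / 2 * f plo * plo).
  assert (HV1 : V = e * plo).
  { destruct (Req_dec plo 0) as [Z|Z]. { unfold V; rewrite Z; ring. }
    assert (f plo = c) by (apply Rle_antisym; [lra| apply Hge; lra]).
    unfold V; rewrite H; unfold c; field; lra. }
  assert (HV2 : V = mfun f Lambda e plo).
  { unfold mfun. assert (HVV : V = Lambda * f plo * plo - V) by (unfold V; field).
    replace ((Lambda * f plo - e) * plo) with (Lambda * f plo * plo - e * plo) by ring.
    rewrite <- HV1. lra. }
  assert (HVpos : 0 <= V) by (rewrite HV1; apply Rmult_le_pos; lra).
  assert (Hmdec : forall a, plo < a <= phi_h -> mfun f Lambda e a <= mfun f Lambda e plo).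
  { intros a Ha.
    destruct (Req_dec plo phi_m) as [Z|Z].
    { rewrite Z; apply Hmax; lra. }
    set (t := (a - plo) / (a - phi_m)).
    assert (Ht : 0 < t < 1).
    { unfold t; split; [apply Rdiv_lt_0_compat; lra|].
      apply (Rmult_lt_reg_r (a - phi_m)); [lra|]. field_simplify; lra. }
    assert (Hz : t * phi_m + (1 - t) * a = plo) by (unfold t; field; lra).
    assert (Hc := Hconc phi_m a t ltac:(lra) ltac:(lra) ltac:(lra) Ht).
    rewrite Hz in Hc. clearbody t.
    assert (Hfd := Hdec phi_m a ltac:(lra) ltac:(lra) ltac:(lra)).
    assert (Hmm := Hmax a ltac:(lra)).
    unfold mfun in *.
    assert (f plo * plo >= t * (f phi_m * phi_m) + (1 - t) * (f a * a)).
    { assert (H1 : f plo * plo >= (t * f phi_m + (1 - t) * f a) * plo).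
      { apply Rle_ge, Rmult_le_compat_r; lra. }
      assert (H2 : (t * f phi_m + (1 - t) * f a) * plo
              - (t * (f phi_m * phi_m) + (1 - t) * (f a * a))
              = t * (1 - t) * (f phi_m - f a) * (a - phi_m)) by (rewrite <- Hz; ring).
      assert (H3 : 0 <= t * (1 - t) * (f phi_m - f a) * (a - phi_m)).
      { apply Rmult_le_pos; [apply Rmult_le_pos; [apply Rmult_le_pos|]|]; lra. }
      lra. }
    assert (H4 : t * (Lambda * f phi_m * phi_m - e * phi_m) + (1 - t) * (Lambda * f a * a - e * a)
       >= t * (Lambda * f a * a - e * a) + (1 - t) * (Lambda * f a * a - e * a)).
    { apply Rle_ge, Rplus_le_compat_r, Rmult_le_compat_l; lra. }
    assert (H5 : (Lambda * f plo - e) * plo - (t * (Lambda * f phi_m * phi_m - e * phi_m) + (1 - t) * (Lambda * f a * a - e * a))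
       = Lambda * (f plo * plo - (t * (f phi_m * phi_m) + (1 - t) * (f a * a)))) by (rewrite <- Hz at 2 4; ring).
    assert (H6 : 0 <= Lambda * (f plo * plo - (t * (f phi_m * phi_m) + (1 - t) * (f a * a)))).
    { apply Rmult_le_pos; lra. }
    replace ((Lambda * f a - e) * a) with (Lambda * f a * a - e * a) by ring.
    lra. }
  assert (Hpp : payoff f Lambda e phi_h plo plo = V).
  { unfold payoff; cbv zeta. rewrite Hplo0.
    destruct (total_order_T plo plo) as [[H|H]|H]; try (exfalso; lra).
    destruct (Rbar_lt_dec (Finite plo) (Finite plo)) as [H1|H1]; [simpl in H1; lra|].
    reflexivity. }
  assert (Hdev : forall a, in_act phi_h a -> payoff f Lambda e phi_h a plo <= payoff f Lambda e phi_h plo plo).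
  { intros a Ha. unfold in_act in Ha. rewrite Hpp.
    unfold payoff; cbv zeta. rewrite Hplo0.
    destruct (total_order_T a plo) as [[H|H]|H].
    - destruct (Rbar_lt_dec _ _).
      + nra.
      + assert (Rmin (Lambda * f a) e <= e) by apply Rmin_r. nra.
    - subst a. destruct (Rbar_lt_dec (Finite plo) (Finite plo)) as [H1|H1]; [simpl in H1; lra|].
      unfold V; lra.
    - destruct (Rbar_lt_dec (Finite a) (Finite plo)) as [H1|H1]; [simpl in H1; lra|].
      destruct (Rbar_lt_dec _ _).
      + rewrite HV2. apply Hmdec. lra.
      + lra. }
  unfold is_nash, in_act. repeat split; try lra; apply Hdev.
Qed.
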